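(* Let $(\mathcal{F},\tau)$ be a locally convex Hausdorff space of $\mathbb{K}$-valued continuous functions on a non-empty Hausdorff $gk_{\mathbb{R}}$-space $\Omega$, and $\mathcal{B}$ the family of $\tau$-bounded sets. If $(\mathcal{F},\tau)$ satisfies (BBC) for some locally convex Hausdorff topology $\widetilde{\tau}$ on $\mathcal{F}$ with $\tau_{\mathrm{co}}\leq\widetilde{\tau}$, then the map $\Delta\colon\Omega\to(\mathcal{F}_{\mathcal{B},\widetilde{\tau}}',\beta)$, $\Delta(x)=\delta_x$, is (well-defined and) continuous.
   Context: $\mathbb{K}\in\{\mathbb{R},\mathbb{C}\}$. $\delta_x(f)=f(x)$. $\tau_{\mathrm{co}}$ is the compact-open topology (uniform convergence on compact subsets of $\Omega$), restricted to $\mathcal{F}$. (BBC) for $\widetilde{\tau}$: every $\tau$-bounded subset of $\mathcal{F}$ is contained in an absolutely convex $\tau$-bounded $\widetilde{\tau}$-compact set. $\mathcal{F}_{\mathcal{B},\widetilde{\tau}}'$ is the space of linear functionals on $\mathcal{F}$ whose restriction to each $\tau$-bounded set is $\widetilde{\tau}$-continuous, with topology $\beta$ of uniform convergence on $\tau$-bounded sets. A topological space $\Omega$ is a $gk_{\mathbb{R}}$-space if for every completely regular space $Z$, every map $\Omega\to Z$ whose restrictions to all compact subsets are continuous is continuous. *)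

(* Defs.v *)
From HB Require Import structures.
From mathcomp Require Import all_boot all_order all_algebra.
From mathcomp Require Import all_classical all_reals all_analysis.
From mathcomp Require Import complex.
Set Implicit Arguments. Unset Strict Implicit. Unset Printing Implicit Defensive.
Import Order.TTheory GRing.Theory Num.Theory.
Import numFieldNormedType.Exports.
Local Open Scope classical_set_scope.
Local Open Scope ring_scope.

Definition completely_regular (R : realType) (Z : topologicalType) :=
  forall (C : set Z) (z : Z), closed C -> ~ C z ->
    exists g : Z -> R, [/\ continuous g, g z = 0 & forall c, C c -> g c = 1].

Definition gkR_space (R : realType) (Om : topologicalType) :=
  forall Z : topologicalType, completely_regular R Z ->
    forall h : Om -> Z, (forall C : set Om, compact C -> {within C, continuous h}) ->
      continuous h.

Section FunctionSpaces.
Context {K : numFieldType} {Om : topologicalType}.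
Local Notation fn := (Om -> K).

Definition fadd (f g : fn) : fn := fun w => f w + g w.
Definition fscale (a : K) (f : fn) : fn := fun w => a * f w.
Definition fzero : fn := fun _ => 0.

Definition function_space (F : set fn) :=
  [/\ F fzero, (forall f g, F f -> F g -> F (fadd f g)),
      (forall a f, F f -> F (fscale a f)) & (forall f, F f -> continuous f)].

Definition is_topology_on (F : set fn) (T : set (set fn)) :=
  [/\ (forall U, T U -> U `<=` F), T F,
      (forall U V, T U -> T V -> T (U `&` V)) &
      (forall S : set (set fn), S `<=` T -> T (\bigcup_(U in S) U))].

Definition add_continuous (F : set fn) (T : set (set fn)) :=
  forall f g U, F f -> F g -> T U -> U (fadd f g) ->
    exists V W, [/\ T V, T W, V f, W g &
                    forall h k, V h -> W k -> U (fadd h k)].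

Definition scale_continuous (F : set fn) (T : set (set fn)) :=
  forall a f U, F f -> T U -> U (fscale a f) ->
    exists e : K, 0 < e /\ exists V, [/\ T V, V f &
       forall b h, `|b - a| < e -> V h -> U (fscale b h)].

Definition convex_fset (V : set fn) :=
  forall f g (t : K), V f -> V g -> 0 <= t <= 1 ->
    V (fadd (fscale t f) (fscale (1 - t) g)).

Definition locally_convex (T : set (set fn)) :=
  forall f U, T U -> U f -> exists V, [/\ T V, V f, convex_fset V & V `<=` U].

Definition hausdorff_on (F : set fn) (T : set (set fn)) :=
  forall f g, F f -> F g -> f <> g ->
    exists U V, [/\ T U, T V, U f, V g & U `&` V = set0].

Definition lc_hausdorff (F : set fn) (T : set (set fn)) :=
  [/\ is_topology_on F T, add_continuous F T, scale_continuous F T,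
      locally_convex T & hausdorff_on F T].

Definition bounded_in (F : set fn) (T : set (set fn)) (B : set fn) :=
  B `<=` F /\
  forall U, T U -> U fzero -> exists s : K, 0 < s /\
    forall t : K, s < t -> forall f, B f -> exists u, U u /\ f = fscale t u.

Definition compact_in (T : set (set fn)) (D : set fn) :=
  forall S : set (set fn), S `<=` T -> D `<=` \bigcup_(U in S) U ->
    exists S', [/\ finite_set S', S' `<=` S & D `<=` \bigcup_(U in S') U].

Definition abs_convex (D : set fn) :=
  forall f g (a b : K), D f -> D g -> `|a| + `|b| <= 1 ->
    D (fadd (fscale a f) (fscale b g)).

Definition BBC (F : set fn) (T Tt : set (set fn)) :=
  forall B, bounded_in F T B ->
    exists D, [/\ B `<=` D, abs_convex D, bounded_in F T D & compact_in Tt D].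

Definition tau_co (F : set fn) : set (set fn) :=
  [set U | U `<=` F /\ forall f, U f -> exists (C : set Om) (e : K),
      [/\ compact C, 0 < e &
          [set g | F g /\ forall x, C x -> `|g x - f x| < e] `<=` U]].

Definition dual_B (F : set fn) (T Tt : set (set fn)) : set (fn -> K) :=
  [set phi | (forall a f g, F f -> F g ->
                phi (fadd (fscale a f) g) = a * phi f + phi g) /\
     forall B, bounded_in F T B -> forall f, B f -> forall e : K, 0 < e ->
       exists V, [/\ Tt V, V f & forall g, B g -> V g -> `|phi g - phi f| < e]].

Definition beta_open (F : set fn) (T Tt : set (set fn)) (U : set (fn -> K)) :=
  U `<=` dual_B F T Tt /\
  forall phi, U phi -> exists (B : set fn) (e : K),
    [/\ bounded_in F T B, 0 < e &
        [set psi | dual_B F T Tt psi /\ forall f, B f -> `|psi f - phi f| < e]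
          `<=` U].

Definition delta (x : Om) : fn -> K := fun f => f x.

End FunctionSpaces.

Definition prop4p9_for (R : realType) (K : numFieldType) :=
  forall (Om : topologicalType) (F : set (Om -> K)) (tau taut : set (set (Om -> K))),
    hausdorff_space Om -> (exists x : Om, True) -> gkR_space R Om ->
    function_space F -> lc_hausdorff F tau -> lc_hausdorff F taut ->
    tau_co F `<=` taut -> BBC F tau taut ->
    (forall x : Om, dual_B F tau taut (delta x)) /\
    (forall U, beta_open F tau taut U -> open (delta @^-1` U)).

(* Main.v *)
Set Warnings "-all".
Require Import Defs.
From HB Require Import structures.
From mathcomp Require Import all_boot all_order all_algebra.
From mathcomp Require Import all_classical all_reals all_analysis.
From mathcomp Require Import complex.
From mathcomp Require Import ring lra.
Import Order.TTheory GRing.Theory Num.Theory.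
Import numFieldNormedType.Exports.
Local Open Scope classical_set_scope.
Local Open Scope ring_scope.
Section Core.
Context {K : numFieldType} {Om : topologicalType}.

Lemma core_equi (F : set (Om -> K)) (tau taut : set (set (Om -> K)))
  (C : set Om) (x1 : Om) (B : set (Om -> K)) (e : K) :
  function_space F -> tau_co F `<=` taut -> BBC F tau taut -> compact C -> C x1 ->
  bounded_in F tau B -> 0 < e ->
  \forall x \near x1, C x -> forall f, B f -> `|f x - f x1| < e.
Proof.
move=> [_ _ _ Fc] coT bbc cC Cx1 bB e0.
have [D [BD _ [DF _] cD]] := bbc B bB.
pose e' := e / 3.
have e'0 : 0 < e' by rewrite divr_gt0.
pose O (f : Om -> K) := [set g | F g /\ exists d : K, 0 < d /\
   forall y, C y -> `|g y - f y| < e' - d].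
pose S := [set O f | f in D].
have ST : S `<=` taut.
  move=> _ [f Df <-]; apply: coT; split; first by move=> g [].
  move=> g [Fg [d [d0 Hd]]]; exists C, (d/2); split => //; first by rewrite divr_gt0.
  move=> h [Fh Hh]; split=> //; exists (d/2); split; first by rewrite divr_gt0.
  move=> y Cy; apply: le_lt_trans (ler_distD (g y) _ _) _.
  have -> : e' - d / 2 = d / 2 + (e' - d) by field.
  by apply: ltrD; [exact: Hh | exact: Hd].
have DS : D `<=` \bigcup_(U in S) U.
  move=> f Df; exists (O f); first by exists f.
  split; first exact: DF.
  exists (e' / 2); split; first by rewrite divr_gt0.
  move=> y _; rewrite subrr normr0.
  have -> : e' - e' / 2 = e' / 2 by field.
  by rewrite divr_gt0.
have [S' [finS' S'S DS']] := cD S ST DS.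
have [X SX] := finite_fsetP.1 finS'.
pose P (U : set (Om -> K)) := [set x | C x -> forall g, U g -> `|g x - g x1| < e].
have : \forall x \near x1, (\bigcap_(U in S') P U) x.
  rewrite SX; apply: filter_bigI => U UX.
  have : S' U by rewrite SX.
  move=> /S'S [f0 Df0 <-].
  have := Fc f0 (DF f0 Df0) x1.
  move=> /cvgrPdist_lt /(_ e' e'0).
  apply: filterS => x Hx Cx g [Fg [d [d0 Hd]]].
  have -> : e = e' + e' + e' by rewrite /e'; field.
  apply: le_lt_trans (ler_distD (f0 x1) _ _) _.
  apply: le_lt_trans (lerD (ler_distD (f0 x) _ _) (lexx _)) _.
  rewrite ltrD //; last first.
    rewrite distrC; apply: lt_le_trans (Hd x1 Cx1) _.
    by rewrite gerBl ltW.
  rewrite ltrD //; last by rewrite distrC.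
  apply: lt_le_trans (Hd x Cx) _.
  by rewrite gerBl ltW.
apply: filterS => x Hx Cx f Bf.
have [U S'U Uf] := DS' f (BD f Bf).
exact: (Hx U S'U Cx f Uf).
Qed.

Lemma part1 (F : set (Om -> K)) (tau taut : set (set (Om -> K))) (x : Om) :
  tau_co F `<=` taut -> dual_B F tau taut (delta x).
Proof.
move=> coT; split; first by [].
move=> B [BF _] f Bf e e0.
exists [set g | F g /\ `|g x - f x| < e]; split.
- apply: coT; split; first by move=> g [].
  move=> g [Fg Hg]; exists [set x], (e - `|g x - f x|); split.
  + exact: compact_set1.
  + by rewrite subr_gt0.
  + move=> h [Fh Hh]; split => //.
    apply: le_lt_trans (ler_distD (g x) _ _) _.
    have := Hh x erefl; rewrite ltrBrDr; exact.
- by split; [exact: BF | rewrite subrr normr0].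
- by move=> g _ [].
Qed.
End Core.

Lemma creg_R (R : realType) : completely_regular R R.
Proof.
move=> C z cC nCz.
have : nbhs z (~` C) by apply: open_nbhs_nbhs; split => //; exact: closed_openC.
move=> /nbhs_ballP [r /= r0 Hr].
exists (fun y => Num.min 1 (`|y - z| / r)); split.
- move=> y; apply: (@continuous_min R R (fun _ => 1) (fun y => `|y - z| / r)); first exact: cvg_cst.
  apply: cvgM; last exact: cvg_cst.
  apply: cvg_norm; apply: cvgB; [exact: cvg_id | exact: cvg_cst].
- by rewrite subrr normr0 mul0r; apply: min_r.
- move=> c Cc; apply: min_l.
  rewrite ler_pdivlMr // mul1r.
  rewrite leNgt; apply/negP => H; apply: (Hr c) => //.
  by rewrite -ball_normE /= distrC.
Qed.

Lemma gminl (R : realType) (a b : R) : Num.min a b <= a.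
Proof. by rewrite ge_min lexx. Qed.
Lemma gminr (R : realType) (a b : R) : Num.min a b <= b.
Proof. by rewrite ge_min lexx orbT. Qed.

Lemma min_aux (R : realType) (a b c : R) : a <= b + c -> 0 <= c ->
  Num.min 1 a <= Num.min 1 b + c.
Proof.
move=> abc c0; have [b1|b1] := leP b 1.
  by rewrite ge_min; apply/orP; right; lra.
by rewrite ge_min; apply/orP; left; lra.
Qed.

Lemma min_aux2 (R : realType) (a er : R) : Num.min 1 a < Num.min 1 er -> a < er.
Proof.
rewrite !lt_min !gt_min ltxx /= => /andP[H1 H2].
move: H2 => /orP[H2|H2] //; lra.
Qed.

Lemma part2 (R : realType) (K : numFieldType) (nr : K -> R)
  (Hnn : forall k, 0 <= nr k)
  (Hn1 : forall a b c : K, nr (a - b) <= nr (a - c) + nr (c - b))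
  (Hn0 : nr 0 = 0)
  (Hn3 : forall e : K, 0 < e -> exists2 er : R, 0 < er & forall k, nr k < er -> `|k| < e)
  (Hn4 : forall er : R, 0 < er -> exists2 e : K, 0 < e & forall k, `|k| < e -> nr k < er)
  (Om : topologicalType) (F : set (Om -> K)) (tau taut : set (set (Om -> K))) :
  gkR_space R Om -> function_space F -> tau_co F `<=` taut -> BBC F tau taut ->
  forall U, beta_open F tau taut U -> open (delta @^-1` U).
Proof.
move=> gk fs coT bbc U [Ud Uball].
rewrite openE => x0 Ux0.
have [B [e [bB e0 ball]]] := Uball _ Ux0.
have [er er0 Her] := Hn3 e e0.
pose S x := [set Num.min 1 (nr (f x - f x0)) | f in B].
pose h x := sup (S x).
have hub x f : B f -> Num.min 1 (nr (f x - f x0)) <= h x.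
  move=> Bf; apply: ub_le_sup; last by exists f.
  by exists 1 => _ [g _ <-]; exact: gminl.
have hle x r : (forall f, B f -> Num.min 1 (nr (f x - f x0)) <= r) -> 0 <= r -> h x <= r.
  move=> Hr r0; have [B0|/set0P[f Bf]] := eqVneq B set0.
    by rewrite /h /S B0 image_set0 sup0.
  apply: ge_sup; first by exists (Num.min 1 (nr (f x - f x0))), f.
  by move=> _ [g Bg <-]; exact: Hr.
have h0 x : 0 <= h x.
  have [B0|/set0P[f Bf]] := eqVneq B set0.
    by rewrite /h /S B0 image_set0 sup0.
  apply: le_trans (hub x f Bf); rewrite le_min ler01; exact: Hnn.
have hcont : continuous h.
  apply: (gk R (creg_R R)) => C cC.
  apply/subspace_continuousP => x1 Cx1.
  apply/cvgrPdist_lt => eps eps0.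
  have [eK eK0 HeK] := Hn4 (eps / 2) (divr_gt0 eps0 (ltr0Sn _ 1)).
  have := core_equi _ _ _ _ x1 _ _ fs coT bbc cC Cx1 bB eK0.
  rewrite near_withinE; apply: filterS => x Hx Cx.
  have A1 : h x <= h x1 + eps / 2.
    apply: hle; last by apply: addr_ge0 => //; apply: divr_ge0; [exact: ltW|].
    move=> f Bf; apply: le_trans (lerD (hub x1 f Bf) (lexx _)).
    apply: min_aux; last by apply: divr_ge0; [exact: ltW|].
    apply: le_trans (Hn1 _ _ (f x1)) _; rewrite addrC lerD2l.
    by apply/ltW/HeK/Hx.
  have A2 : h x1 <= h x + eps / 2.
    apply: hle; last by apply: addr_ge0 => //; apply: divr_ge0; [exact: ltW|].
    move=> f Bf; apply: le_trans (lerD (hub x f Bf) (lexx _)).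
    apply: min_aux; last by apply: divr_ge0; [exact: ltW|].
    apply: le_trans (Hn1 _ _ (f x)) _; rewrite addrC lerD2l.
    by apply/ltW/HeK; rewrite distrC; apply/Hx.
  rewrite /from_subspace real_ltr_norml ?num_real //; apply/andP; split; lra.
have hx0 : h x0 = 0.
  apply/le_anti; rewrite h0 andbT; apply: hle => // f _.
  by rewrite subrr Hn0; exact: gminr.
have := hcont x0; move=> /cvgrPdist_lt /(_ (Num.min 1 er)).
rewrite lt_min ltr01 er0 => /(_ erefl).
apply: filterS => x; rewrite hx0 sub0r normrN => Hx.
apply: ball; split; first exact: part1.
move=> f Bf; rewrite /delta; apply: Her; apply: min_aux2.
apply: le_lt_trans (hub x f Bf) _.
exact: le_lt_trans (ler_norm _) Hx.
Qed.

Local Open Scope complex_scope.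
Lemma nC (R : realType) (k : R[i]) : `|k| = (complex.Re `|k|)%:C.
Proof. by rewrite normc_def. Qed.

Theorem proposition4p9 (R : realType) :
  prop4p9_for R R /\ prop4p9_for R (complex R).
Proof.
split => Om F tau taut _ _ gk fs _ _ coT bbc; (split; first by move=> x; exact: part1).
- apply: (@part2 R R (fun k => `|k|)) => //.
  + by move=> a b c; exact: ler_distD.
  + exact: normr0.
  + by move=> e e0; exists e.
  + by move=> e e0; exists e.
- apply: (@part2 R (complex R) (fun k => complex.Re `|k|)) => //.
  + by move=> k; have := normr_ge0 k; rewrite lecE => /andP[_].
  + by move=> a b c; rewrite -lecR rmorphD /= -!nC; exact: ler_distD.
  + by rewrite normr0.
  + move=> e; rewrite ltcE /= => /andP[/eqP Ie Re0]; exists (complex.Re e) => // k Hk.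
    by rewrite nC ltcE /= Ie eqxx Hk.
  + move=> er er0; exists er%:C; first by rewrite ltcR.
    by move=> k; rewrite nC ltcR.
Qed.
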